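(* Let $I=(p_t)_{t\in[n]}$ be an instance and $\hat I=(\hat p_t)_{t\in[n]}$ a prediction. For every $S\subseteq[n]$, letting $\hat I_S$ be the instance with $t$-th entry $p_t$ for $t\in S$ and $\hat p_t$ for $t\notin S$, we have $\tau([1,n],I,\hat I)\ge\tau([1,n],I,\hat I_S)$ (monotonicity). Moreover $|\mathrm{opt}(I)-\mathrm{opt}(\hat I)|\le\tau([1,n],I,\hat I)$ (Lipschitzness).
   Context: Fix a real parameter $d>0$. An instance is a finite sequence $I=(p_t)_{t\in[T]}$ of nonnegative reals; instances of different lengths are compared by padding with zeros. A solution is a finite set $X=\{x_1<\dots<x_k\}\subseteq[T]$; it is feasible for $I$ if either all $p_t=0$, or $X\ne\emptyset$ and $\max X\ge\max\{t:p_t>0\}$. With $x_0:=0$, $F(I,X)=|X|+\frac1d\sum_{i=1}^{k}\sum_{t=x_{i-1}+1}^{x_i}p_t(x_i-t)$, and $\mathrm{opt}(I)=\min\{F(I,X): X\text{ feasible}\}$. For $a\le b$, the subinstance $I\langle a,b\rangle=(p_t)_{t\in\{a,\dots,b\}}$ is an instance on time set $\{a,\dots,b\}$ (solutions are subsets of $\{a,\dots,b\}$, cost formula with $x_0:=a-1$). For an actual instance $I=(p_t)$ and a predicted instance $\hat I=(\hat p_t)$ on the same time set, the overpredicted instance is $O(I,\hat I)=(\max\{p_t,\hat p_t\})_t$ and the underpredicted instance is $U(I,\hat I)=(\min\{p_t,\hat p_t\})_t$. The auxiliary error on $[t_1,t_2]$ is $\tau([t_1,t_2],I,\hat I)=\mathrm{opt}(O(I\langle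 t_1,t_2\rangle,\hat I\langle t_1,t_2\rangle))-\mathrm{opt}(U(I\langle t_1,t_2\rangle,\hat I\langle t_1,t_2\rangle))$. *)

(* Defs.v *)
From HB Require Import structures.
From mathcomp Require Import all_boot all_order all_algebra.
Set Implicit Arguments. Unset Strict Implicit. Unset Printing Implicit Defensive.
Import Order.TTheory GRing.Theory Num.Theory.
Local Open Scope ring_scope.

Section Defs.
Variable R : realFieldType.

(* An instance on time set [1..n] is (n, p) with p : nat -> R, only the
   values p 1, ..., p n matter.  A solution is X : {set 'I_n}, where the
   element i : 'I_n stands for the time (val i).+1. *)

(* cost of the consecutive segments, x_0 := prev *)
Fixpoint segcost (p : nat -> R) (prev : nat) (xs : seq nat) : R :=
  match xs with
  | [::] => 0
  | x :: xs' =>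
      (\sum_(prev.+1 <= t < x.+1) p t * (x - t)%:R) + segcost p x xs'
  end.

Definition times (n : nat) (X : {set 'I_n}) : seq nat :=
  sort leq [seq (val x).+1 | x <- enum X].

Definition cost (d : R) (n : nat) (p : nat -> R) (X : {set 'I_n}) : R :=
  #|X|%:R + d^-1 * segcost p 0 (times X).

Definition feasible (n : nat) (p : nat -> R) (X : {set 'I_n}) : bool :=
  [forall t : 'I_n, p (val t).+1 == 0] ||
  [exists x in X, [forall t : 'I_n, (0 < p (val t).+1) ==> (t <= x)%N]].

(* opt(I) = min of F(I,X) over feasible X (the full set [n] is always
   feasible, so it serves as a harmless seed of the minimum) *)
Definition opt (d : R) (n : nat) (p : nat -> R) : R :=
  \big[Num.min/cost d p [set: 'I_n]]_(X : {set 'I_n} | feasible p X) cost d p X.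

(* subinstance I<a,b>, shifted to time set [1 .. b-a+1]; the cost is
   invariant under this shift since x_0 := a-1 becomes 0 *)
Definition subinst (p : nat -> R) (a : nat) : nat -> R := fun t => p (t + a).-1.

Definition overI (p ph : nat -> R) : nat -> R := fun t => Num.max (p t) (ph t).
Definition underI (p ph : nat -> R) : nat -> R := fun t => Num.min (p t) (ph t).

Definition tau (d : R) (t1 t2 : nat) (p ph : nat -> R) : R :=
  opt d (t2.+1 - t1) (overI (subinst p t1) (subinst ph t1))
  - opt d (t2.+1 - t1) (underI (subinst p t1) (subinst ph t1)).

(* Ih_S : p_t for t in S, ph_t otherwise (S subset of [n], i in S is time i+1) *)
Definition mixS (n : nat) (S : {set 'I_n}) (p ph : nat -> R) : nat -> R :=
  fun t => if [exists i in S, (val i).+1 == t] then p t else ph t.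

Definition is_instance (n : nat) (p : nat -> R) : Prop :=
  forall t, (1 <= t <= n)%N -> 0 <= p t.

End Defs.

(* Main.v *)
Require Import Defs.
From HB Require Import structures.
From mathcomp Require Import all_boot all_order all_algebra.
From mathcomp Require Import lra.
Import Order.TTheory GRing.Theory Num.Theory.
Local Open Scope ring_scope.

Lemma segcost_mono (R : realFieldType) (n : nat) (p q : nat -> R)
  (hpq : forall t, (1 <= t <= n)%N -> p t <= q t) :
  forall xs prev, all (fun x => x <= n)%N xs ->
  segcost p prev xs <= segcost q prev xs.
Proof.
elim=> [|x xs IH] prev //= /andP [hx hxs].
apply: lerD; last exact: IH.
apply: ler_sum_nat => t /andP [h1 h2].
apply: ler_wpM2r; first exact: ler0n.
apply: hpq; apply/andP; split; first by apply: leq_trans h1.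
by apply: leq_trans hx; rewrite -ltnS.
Qed.

Lemma times_le (n : nat) (X : {set 'I_n}) : all (fun x => x <= n)%N (times X).
Proof.
apply/allP => x; rewrite /times mem_sort => /mapP [i _ ->]; exact: ltn_ord.
Qed.

Lemma cost_mono (R : realFieldType) (d : R) (hd : 0 < d) (n : nat) (p q : nat -> R)
  (hpq : forall t, (1 <= t <= n)%N -> p t <= q t) (X : {set 'I_n}) :
  cost d p X <= cost d q X.
Proof.
rewrite /cost lerD2l; apply: ler_wpM2l; first by rewrite invr_ge0 ltW.
exact: (segcost_mono _ _ _ _ hpq _ _ (times_le _ X)).
Qed.

Lemma feas_mono (R : realFieldType) (n : nat) (p q : nat -> R)
  (hp : forall t, (1 <= t <= n)%N -> 0 <= p t)
  (hpq : forall t, (1 <= t <= n)%N -> p t <= q t) (X : {set 'I_n}) :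
  feasible q X -> feasible p X.
Proof.
have ht : forall t : 'I_n, (1 <= (val t).+1 <= n)%N by move=> t; rewrite /= ltn_ord.
rewrite /feasible => /orP [/forallP H | /existsP [x /andP [hx /forallP H]]].
  apply/orP; left; apply/forallP => t; rewrite eq_le hp ?ht // andbT.
  by rewrite -(eqP (H t)); apply: hpq.
apply/orP; right; apply/existsP; exists x; rewrite hx /=.
apply/forallP => t; apply/implyP => hpt.
have := H t; move/implyP; apply.
exact: lt_le_trans hpt (hpq _ (ht t)).
Qed.

Lemma opt_mono (R : realFieldType) (d : R) (hd : 0 < d) (n : nat) (p q : nat -> R)
  (hp : forall t, (1 <= t <= n)%N -> 0 <= p t)
  (hpq : forall t, (1 <= t <= n)%N -> p t <= q t) :
  opt d n p <= opt d n q.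
Proof.
rewrite {2}/opt; apply: (big_ind (fun y => opt d n p <= y)).
- rewrite /opt; apply: le_trans (cost_mono _ _ hd _ _ _ hpq _).
  by elim/big_rec: _ => // i y _ hy; rewrite ge_min hy orbT.
- by move=> a b ha hb; rewrite le_min ha hb.
- move=> X hX; apply: le_trans (cost_mono _ _ hd _ _ _ hpq _).
  by rewrite /opt (bigD1 X) ?(feas_mono _ _ _ _ hp hpq _ hX) //= ge_min lexx.
Qed.

Theorem mainTheorem3 (R : realFieldType) (d : R) (hd : 0 < d)
  (n : nat) (p ph : nat -> R) (hp : is_instance n p) (hph : is_instance n ph) :
  (forall S : {set 'I_n}, tau d 1 n p (mixS S p ph) <= tau d 1 n p ph) /\
  `|opt d n p - opt d n ph| <= tau d 1 n p ph.
Proof.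
have hn : (n.+1 - 1 = n)%N by rewrite subn1.
have hs : forall f : nat -> R, forall t, subinst f 1 t = f t.
  by move=> f t; rewrite /subinst addn1.
rewrite /tau hn /overI /underI.
have hU : forall t, (1 <= t <= n)%N -> 0 <= Num.min (subinst p 1 t) (subinst ph 1 t).
  by move=> t ht; rewrite !hs le_min hp ?hph.
split.
  move=> S; apply: lerB.
    apply: (opt_mono _ _ hd) => // t ht; rewrite !hs.
      by rewrite le_max hp.
    rewrite ge_max le_max lexx /= le_max /mixS.
    by case: ifP => _; rewrite lexx ?orbT.
  apply: (opt_mono _ _ hd) => // t ht; rewrite !hs le_min ge_min lexx /= ge_min /mixS.
  by case: ifP => _; rewrite lexx ?orbT.
have h1 : forall f, (forall t, (1 <= t <= n)%N -> 0 <= f t) ->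
   (forall t, f t = p t \/ f t = ph t) ->
   opt d n (fun t => Num.min (subinst p 1 t) (subinst ph 1 t)) <= opt d n f /\
   opt d n f <= opt d n (fun t => Num.max (subinst p 1 t) (subinst ph 1 t)).
  move=> f hf hfe; split; apply: (opt_mono _ _ hd) => // t ht; rewrite !hs.
    by case: (hfe t) => ->; rewrite ge_min lexx ?orbT.
  by case: (hfe t) => ->; rewrite le_max lexx ?orbT.
have [a1 a2] := h1 p hp (fun t => or_introl erefl).
have [b1 b2] := h1 ph hph (fun t => or_intror erefl).
rewrite ler_norml; apply/andP; split.
  lra.
lra.
Qed.
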